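(* Let $(T,\mathcal{V})$ be a tree decomposition of a graph $G$. For every node $t\in V(T)$, let $\mathscr{C}(t)$ be a set of cycles of $G$ each of which is fenced by $V_t$ but is not contained in $G[V_t]$ (i.e. its vertex set is not a subset of $V_t$). If $\mathscr{C}(t)\neq\emptyset$ for every node $t\in V(T)$, then there exist an edge $tt'\in E(T)$ and cycles $C\in\mathscr{C}(t)$ and $D\in\mathscr{C}(t')$ such that $\mathrm{Br}_t(C)=\mathrm{Br}_t(t')$ and $\mathrm{Br}_{t'}(D)=\mathrm{Br}_{t'}(t)$.
   Context: A tree decomposition of $G$ is a pair $(T,\mathcal{V})$ where $T$ is a tree and $\mathcal{V}=\{V_t : t\in V(T)\}$ is a collection of subsets (bags) of $V(G)$ such that every vertex of $G$ lies in some bag, every edge of $G$ has both ends in some bag, and for every vertex $v$ the set of nodes whose bags contain $v$ induces a connected subtree of $T$. For $S\subseteq V(G)$, $S$ separates a set $X$ of vertices if two vertices of $X$ lie in different components of $G-S$. A path or cycle $C'$ crosses $S$ if $S$ separates $V(C')$; otherwise $S$ fences $C'$. For distinct nodes $t,t'$, $\mathrm{Br}_t(t')$ denotes the component of $T-t$ containing $t'$. For a vertex $v\notin V_t$, $\mathrm{Br}_t(v)$ is the component of $T-t$ containing the nodes whose bags contain $v$. For a path or cycle $C'$ fenced by $V_t$ with $V(C')\not\subseteq V_t$, all $v\in V(C')\setminus V_t$ have the same $\mathrm{Br}_t(v)$, denoted $\mathrm{Br}_t(C')$. *)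

(* Defs.v *)
From mathcomp Require Import all_boot.
Set Implicit Arguments. Unset Strict Implicit. Unset Printing Implicit Defensive.

Definition simple_graph (V : finType) (e : rel V) : Prop :=
  symmetric e /\ irreflexive e.

Definition is_tree (N : finType) (tE : rel N) : Prop :=
  [/\ simple_graph tE, 0 < #|N|,
      (forall a b : N, connect tE a b) &
      (forall c : seq N, uniq c -> 3 <= size c -> ~~ cycle tE c)].

Definition is_cycle (V : finType) (e : rel V) (c : seq V) : Prop :=
  [/\ uniq c, 3 <= size c & cycle e c].

Definition tree_decomposition (V N : finType) (e : rel V) (tE : rel N)
    (B : N -> {set V}) : Prop :=
  [/\ is_tree tE,
      (forall v : V, exists t : N, v \in B t),
      (forall u v : V, e u v -> exists t : N, (u \in B t) && (v \in B t)) &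
      (forall (v : V) (t1 t2 : N), v \in B t1 -> v \in B t2 ->
          connect [rel a b | [&& tE a b, v \in B a & v \in B b]] t1 t2)].

Definition del_rel (V : finType) (e : rel V) (S : {set V}) : rel V :=
  [rel a b | [&& e a b, a \notin S & b \notin S]].

Definition separates (V : finType) (e : rel V) (S : {set V}) (X : seq V) : Prop :=
  exists x y : V, [/\ x \in X, y \in X, x \notin S, y \notin S &
                      ~~ connect (del_rel e S) x y].

Definition fences (V : finType) (e : rel V) (S : {set V}) (C : seq V) : Prop :=
  ~ separates e S C.

Definition Br (N : finType) (tE : rel N) (t t' : N) : {set N} :=
  [set s | (s != t) && connect (del_rel tE [set t]) t' s].

(* Br_t(v) for v not in V_t: the component of T - t containing the nodes
   whose bags contain v. *)
Definition Brv (V N : finType) (tE : rel N) (B : N -> {set V}) (t : N) (v : V)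
    : {set N} :=
  [set s | (s != t) &&
     [exists s0, (v \in B s0) && connect (del_rel tE [set t]) s0 s]].

(* Br_t(C) = X : every vertex v of C outside V_t has Br_t(v) = X. *)
Definition BrC_eq (V N : finType) (tE : rel N) (B : N -> {set V}) (t : N)
    (C : seq V) (X : {set N}) : Prop :=
  forall v : V, v \in C -> v \notin B t -> Brv tE B t v = X.

(* Main.v *)
From Stdlib Require Import ClassicalEpsilon.
Require Import Defs.
From mathcomp Require Import all_boot.
Set Implicit Arguments. Unset Strict Implicit. Unset Printing Implicit Defensive.

Lemma periodic_point (N : finType) (f : N -> N) (x : N) :
  exists y, fcycle f (orbit f y).
Proof.
move: {2}(order f x) (leqnn (order f x)) => n.
elim: n x => [|n IH] x Hx.
  by move: (order_gt0 f x); rewrite leqn0 in Hx; rewrite (eqP Hx).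
case: (orderPcycle f x) => [cyc _|_ E]; first by exists x.
by apply: (IH (f x)); rewrite -ltnS -E.
Qed.

Lemma tree_two (N : finType) (tE : rel N) (f : N -> N) :
  is_tree tE -> (forall t, tE t (f t)) -> exists t, f (f t) = t.
Proof.
case=> [[sym irr] /card_gt0P [x _] _ acyc] Hf.
have [y cyc] := periodic_point f x.
have ctE : cycle tE (orbit f y).
  by apply: (sub_cycle _ cyc) => a b /eqP <-.
have hs := size_orbit f y.
have u := orbit_uniq f y.
case Ho: (order f y) => [|[|[|k]]].
- by move: (order_gt0 f y); rewrite Ho.
- move: cyc; rewrite /orbit Ho /= andbT => /eqP fy.
  by move: (Hf y); rewrite fy irr.
- move: cyc; rewrite /orbit Ho /= andbT => /andP [_ /eqP ffy].
  by exists y.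
- by exfalso; move: (acyc _ u); rewrite hs Ho ctE => /(_ isT).
Qed.

Section TD.
Variables (V N : finType) (e : rel V) (tE : rel N) (B : N -> {set V}).
Hypothesis symT : symmetric tE.
Hypothesis bagconn : forall (v : V) (t1 t2 : N), v \in B t1 -> v \in B t2 ->
          connect [rel a b | [&& tE a b, v \in B a & v \in B b]] t1 t2.

Lemma del_sym (S : {set N}) : connect_sym (del_rel tE S).
Proof.
apply: sym_connect_sym => a b; rewrite /del_rel /=.
by rewrite [tE a b]symT [X in _ && X]andbC.
Qed.

Lemma bags_conn t v s0 s1 : v \notin B t -> v \in B s0 -> v \in B s1 ->
  connect (del_rel tE [set t]) s0 s1.
Proof.
move=> vt v0 v1; move: (bagconn v0 v1); apply: connect_sub => a b /= /and3P [ab va vb].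
apply: connect1; rewrite /del_rel /= ab !inE /=.
by apply/andP; split; apply/eqP => E; move: vt; rewrite -E ?va ?vb.
Qed.

Lemma Brv_eq t v s0 : v \notin B t -> v \in B s0 ->
  Brv tE B t v = [set x | (x != t) && connect (del_rel tE [set t]) s0 x].
Proof.
move=> vt v0; apply/setP => x; rewrite !inE; case: (x != t) => //=.
apply/existsP/idP => [[s1 /andP [v1 c]]|c]; last by exists s0; rewrite v0.
by apply: connect_trans c; apply: bags_conn v1.
Qed.

Lemma neighbor a t : a != t -> connect tE a t ->
  exists t', tE t' t /\ connect (del_rel tE [set t]) a t'.
Proof.
move=> hat /connectP [p pth Et]; elim: p a hat pth Et => [|y p IH] a hat /=.
  by move=> _ Et; move: hat; rewrite Et eqxx.
move=> /andP [ay pth] Et.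
have [yt|yt] := eqVneq y t; first by exists a; rewrite connect0 -yt ay.
have [t' [h1 h2]] := IH y yt pth Et; exists t'; split => //.
apply: connect_trans h2; apply: connect1; rewrite /del_rel /= ay !inE hat yt.
done.
Qed.

Hypothesis edgebag : forall u v : V, e u v -> exists t : N, (u \in B t) && (v \in B t).

Lemma Brv_conn t u w : connect (del_rel e (B t)) u w -> u \notin B t ->
  Brv tE B t u = Brv tE B t w.
Proof.
move=> /connectP [p pth ->]; elim: p u pth => [|y p IH] u //= /andP [/and3P [uy ut yt] pth] _.
rewrite -(IH y pth yt).
have [s /andP [us ys]] := edgebag uy.
by rewrite (Brv_eq ut us) (Brv_eq yt ys).
Qed.
End TD.

Theorem lemma5p3 (V N : finType) (e : rel V) (tE : rel N) (B : N -> {set V})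
  (Cs : N -> seq V -> Prop) :
  simple_graph e ->
  tree_decomposition e tE B ->
  (forall (t : N) (C : seq V), Cs t C ->
     [/\ is_cycle e C, fences e (B t) C & ~ {subset C <= B t}]) ->
  (forall t : N, exists C : seq V, Cs t C) ->
  exists (t t' : N) (C D : seq V),
    [/\ tE t t', Cs t C, Cs t' D,
        BrC_eq tE B t C (Br tE t t') & BrC_eq tE B t' D (Br tE t' t)].
Proof.
move=> _ [tree cover edgebag bagconn] HC Hne.
have symT : symmetric tE by case: tree => [[]].
  have tc : forall a b, connect tE a b by case: tree.
have key : forall t, exists t', tE t t' /\ exists C, Cs t C /\ BrC_eq tE B t C (Br tE t t').
  move=> t; have [C cC] := Hne t; have [_ fen nsub] := HC t C cC.
  have [v vC vt] : exists2 v, v \in C & v \notin B t.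
    apply/hasP; apply/negPn/negP => /hasPn H; apply: nsub => z /H.
    by rewrite negbK.
  have [s0 vs0] := cover v.
  have s0t : s0 != t by apply/eqP => E; move: vt; rewrite -E vs0.
  have [t' [tt' c0]] := neighbor s0t (tc s0 t).
  exists t'; split; first by rewrite symT.
  exists C; split => // w wC wt.
  have cvw : connect (del_rel e (B t)) v w.
    apply/negPn/negP => nc; apply: fen; by exists v, w.
  rewrite -(Brv_conn bagconn edgebag cvw vt) (Brv_eq bagconn vt vs0).
  apply/setP => x; rewrite !inE; case: (x != t) => //=.
  apply/idP/idP => h; first by rewrite (del_sym symT) in c0; apply: connect_trans c0 h.
  by apply: connect_trans c0 h.
pose f t := proj1_sig (constructive_indefinite_description _ (key t)).
have Hf t : tE t (f t) /\ exists C, Cs t C /\ BrC_eq tE B t C (Br tE t (f t)).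
  exact: (proj2_sig (constructive_indefinite_description _ (key t))).
have [t ft] := tree_two tree (fun t => proj1 (Hf t)).
have [E1 [C [c1 b1]]] := Hf t; have [_ [D [d1 b2]]] := Hf (f t).
exists t, (f t), C, D; split => //; by rewrite ft in b2.
Qed.
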